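(* In the setting of the context (an agent running fixed-parameter $\mathrm{EXPN}$ with $b$ neighbors whose distributions satisfy $q^i_j(t)\ge\varepsilon_i/K$ for all $i,j,t$), for every time $t$, $$\sum_{j=1}^K\frac{p_j(t)}{p'_j(t)}\le \frac{1}{1-\left(1-\frac1K\right)\Theta}+1=\beta,\qquad\text{where }\Theta=\prod_{i=1}^b\left(1-\frac{\varepsilon_i}{K}\right).$$
   Context: There are $K$ arms. An agent has $b$ neighbors; at time $t$ neighbor $i$ selects an arm according to a probability distribution $q^i(t)=(q^i_1(t),\dots,q^i_K(t))$ satisfying $q^i_j(t)\ge\varepsilon_i/K$ for all arms $j$, with $\varepsilon_i\in(0,1]$. The agent selects arms according to the probability distribution $p(t)$ of the fixed-parameter $\mathrm{EXPN}$ algorithm: with $\eta\in[0,1]$, $\delta>0$, positive weights $w_j(t)$ (with $w_j(1)=1$, $w_j(t+1)=w_j(t)e^{\delta\hat g_j(t)}$ for nonnegative reward estimates $\hat g_j(t)$), $W_t=\sum_j w_j(t)$, and $p_j(t)=(1-\eta)\frac{w_j(t)}{W_t}+\frac{\eta}{K}$. Here $p'_j(t)=1-(1-p_j(t))\prod_{i=1}^b(1-q^i_j(t))$. *)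

(* Defs.v *)
From mathcomp Require Import all_boot all_order all_algebra.
From mathcomp Require Import all_classical all_reals all_analysis.
Set Implicit Arguments. Unset Strict Implicit. Unset Printing Implicit Defensive.
Import Order.TTheory GRing.Theory Num.Theory.
Local Open Scope ring_scope.

(* Time is indexed by nat starting at 0 (paper's time t = our t-1). *)
Fixpoint expn_weight (R : realType) (K : nat) (delta : R)
    (ghat : nat -> 'I_K -> R) (t : nat) (j : 'I_K) : R :=
  match t with
  | 0 => 1
  | t'.+1 => expn_weight delta ghat t' j * expR (delta * ghat t' j)
  end.

Definition expn_W (R : realType) (K : nat) (delta : R)
    (ghat : nat -> 'I_K -> R) (t : nat) : R :=
  \sum_(k < K) expn_weight delta ghat t k.

Definition expn_p (R : realType) (K : nat) (eta delta : R)
    (ghat : nat -> 'I_K -> R) (t : nat) (j : 'I_K) : R :=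
  (1 - eta) * (expn_weight delta ghat t j / expn_W delta ghat t) + eta / K%:R.

Definition p_prime (R : realType) (K b : nat) (eta delta : R)
    (ghat : nat -> 'I_K -> R) (q : nat -> 'I_b -> 'I_K -> R)
    (t : nat) (j : 'I_K) : R :=
  1 - (1 - expn_p eta delta ghat t j) * \prod_(i < b) (1 - q t i j).

Definition Theta (R : realType) (K b : nat) (eps : 'I_b -> R) : R :=
  \prod_(i < b) (1 - eps i / K%:R).

(* Main.v *)
Require Import Defs.
From mathcomp Require Import all_boot all_order all_algebra.
From mathcomp Require Import all_classical all_reals all_analysis.
Import Order.TTheory GRing.Theory Num.Theory.
Local Open Scope ring_scope.
From mathcomp Require Import ring lra.
From mathcomp Require Import ring lra.

Lemma term_bound (R : realType) (p P Th a : R) :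
  0 < p <= 1 -> 0 <= P <= Th -> Th <= 1 -> 0 < a <= 1 ->
  p / (1 - (1 - p) * P) <=
  a / (1 - (1 - a) * Th) + (1 - Th) * (p - a) / (1 - (1 - a) * Th) ^+ 2.
Proof.
move=> /andP[p0 p1] /andP[P0 PT] T1 /andP[a0 a1].
have E0 : 0 < 1 - (1 - p) * Th by nra.
have D0 : 0 < 1 - (1 - a) * Th by nra.
have E'0 : 0 < 1 - (1 - p) * P by nra.
apply: (@le_trans _ _ (p / (1 - (1 - p) * Th))).
  apply: ler_wpM2l; first lra.
  rewrite lef_pV2 ?posrE //; nra.
set E := 1 - (1 - p) * Th; set D := 1 - (1 - a) * Th.
have H : p * D ^+ 2 <= a * D * E + (1 - Th) * (p - a) * E.
  have -> : a * D * E + (1 - Th) * (p - a) * E = p * D ^+ 2 + (1 - Th) * Th * (p - a) ^+ 2.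
    rewrite /D /E; ring.
  rewrite lerDl; apply: mulr_ge0; last exact: sqr_ge0.
  apply: mulr_ge0; [by rewrite subr_ge0 | exact: le_trans P0 PT].
rewrite ler_pdivrMr //.
have -> : (a / D + (1 - Th) * (p - a) / D ^+ 2) * E = (a * D * E + (1 - Th) * (p - a) * E) / D ^+ 2.
  field; by rewrite gt_eqF.
rewrite ler_pdivlMr; last exact: exprn_gt0.
done.
Qed.

Theorem mainTheorem4 (R : realType) (K b : nat) (eta delta : R)
    (ghat : nat -> 'I_K -> R) (q : nat -> 'I_b -> 'I_K -> R)
    (eps : 'I_b -> R) :
  (0 < K)%N ->
  0 <= eta <= 1 ->
  0 < delta ->
  (forall s j, 0 <= ghat s j) ->
  (forall i, 0 < eps i <= 1) ->
  (forall s i j, 0 <= q s i j) ->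
  (forall s i, \sum_(j < K) q s i j = 1) ->
  (forall s i j, eps i / K%:R <= q s i j) ->
  forall t : nat,
    \sum_(j < K) expn_p eta delta ghat t j / p_prime eta delta ghat q t j
    <= 1 / (1 - (1 - 1 / K%:R) * Theta K eps) + 1.
Proof.
move=> K0 /andP[e0 e1] d0 g0 epsP q0 qs qe t.
have K0R : 0 < K%:R :> R by rewrite ltr0n.
have wpos : forall j, 0 < expn_weight delta ghat t j.
  move=> j; elim: t => [|t IH] /=; first exact: ltr01.
  by rewrite mulr_gt0 // expR_gt0.
have Wpos : 0 < expn_W delta ghat t.
  rewrite /expn_W (bigD1 (Ordinal K0)) //=.
  have : 0 <= \sum_(i < K | i != Ordinal K0) expn_weight delta ghat t i.
    by apply: sumr_ge0 => i _; apply: ltW.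
  have := wpos (Ordinal K0); lra.
set p := expn_p eta delta ghat t.
have pge : forall j, 0 < p j.
  move=> j; rewrite /p /expn_p.
  have h1 : 0 < expn_weight delta ghat t j / expn_W delta ghat t by rewrite divr_gt0.
  have h2 : 0 < K%:R^-1 :> R by rewrite invr_gt0.
  rewrite /(_ / _)%R in h1 *; nra.
have psum : \sum_(j < K) p j = 1.
  rewrite /p /expn_p big_split /= -mulr_sumr -mulr_suml sumr_const card_ord.
  rewrite -/(expn_W delta ghat t) divff ?gt_eqF // mulr1.
  rewrite -mulr_natr; field; by rewrite gt_eqF.
have ple : forall j, p j <= 1.
  move=> j; rewrite -psum (bigD1 j) //= lerDl.
  by apply: sumr_ge0 => i _; apply: ltW.
have qle1 : forall i j, q t i j <= 1.
  move=> i j; rewrite -(qs t i) (bigD1 j) //= lerDl.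
  by apply: sumr_ge0 => k _.
have Th1 : Theta K eps <= 1.
  rewrite /Theta; apply: prodr_ile1 => i _; apply/andP; split.
    by rewrite subr_ge0 (le_trans (qe t i (Ordinal K0))).
  by rewrite lerBlDr lerDl divr_ge0 // ?ltW //; case/andP: (epsP i).
have PP : forall j, 0 <= \prod_(i < b) (1 - q t i j) <= Theta K eps.
  move=> j; apply/andP; split.
    by apply: prodr_ge0 => i _; rewrite subr_ge0.
  apply: ler_prod => i _; apply/andP; split; first by rewrite subr_ge0.
  by rewrite lerB.
have a01 : 0 < (1 / K%:R : R) <= 1.
  apply/andP; split; first by rewrite divr_gt0.
  by rewrite ler_pdivrMr // mul1r ler1n.
apply: (@le_trans _ _ (\sum_(j < K) (1 / K%:R / (1 - (1 - 1 / K%:R) * Theta K eps)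
   + (1 - Theta K eps) * (p j - 1 / K%:R) / (1 - (1 - 1 / K%:R) * Theta K eps) ^+ 2))).
  apply: ler_sum => j _; rewrite /p_prime -/p.
  apply: (@term_bound R (p j) (\prod_(i < b) (1 - q t i j)) (Theta K eps) (1 / K%:R)).
  - by rewrite pge ple.
  - exact: PP.
  - exact: Th1.
  - exact: a01.
have D0 : 0 < 1 - (1 - 1 / K%:R) * Theta K eps.
  have h0 : 0 <= Theta K eps by case/andP: (PP (Ordinal K0)) => h h'; exact: le_trans h h'.
  case/andP: a01 => h1 h2.
  have h3 : (1 - 1 / K%:R) * Theta K eps <= 1 - 1 / K%:R.
    by apply: ler_piMr => //; rewrite subr_ge0.
  lra.
rewrite big_split /= sumr_const card_ord -mulr_suml -mulr_sumr sumrB psum sumr_const card_ord.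
have hK : 1 / K%:R *+ K = 1 :> R.
  by rewrite -mulr_natr mul1r mulVf // gt_eqF.
rewrite -mulrnAl hK subrr mulr0 mul0r addr0.
by rewrite lerDl.
Qed.
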